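(* Let $n$ be a power of $2$ and let $A\subseteq\{0,1\}^{\log n}$ be arbitrary. For every $\epsilon>0$, the property $P_A=\{x\in\{0,1\}^n:\exists y\in A,\ x=h(y)\}$ has a quantum property tester with distance parameter $\epsilon$ that makes $O(1/\epsilon)$ queries (the constant independent of $n$ and $A$) and has one-sided error.
   Context: Logarithms are base 2. Positions $i\in\{1,\dots,n\}$ of a string of length $n$ are identified with vectors in $\mathbb{F}_2^{\log n}$. The Hadamard code of $y\in\{0,1\}^{\log n}$ is $h(y)\in\{0,1\}^n$ with $h(y)_i=y\cdot i$ (inner product over $\mathbb{F}_2$). For $P\subseteq\{0,1\}^n$, $x$ is $\epsilon$-far from $P$ if it differs from every $y\in P$ in more than $\epsilon n$ positions. A quantum property tester for $P$ with distance parameter $\epsilon$ is a quantum algorithm with oracle $O_x:\lvert i,b,z\rangle\mapsto\lvert i,b\oplus x_i,z\rangle$ that accepts every $x\in P$ with probability at least $2/3$ and every $x$ that is $\epsilon$-far from $P$ with probability at most $1/3$; one-sided error means every $x\in P$ is accepted with probability $1$. Complexity is the number of oracle queries. *)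

(* Defs.v *)
From HB Require Import structures.
From mathcomp Require Import all_boot all_order all_algebra.
From mathcomp Require Import reals complex.
Set Implicit Arguments. Unset Strict Implicit. Unset Printing Implicit Defensive.
Import Order.TTheory GRing.Theory Num.Theory.
Local Open Scope ring_scope.

(* Position i : 'I_(2^k) is identified with the vector of its k binary digits
   in F_2^k (bit j of i is odd (i %/ 2^j)). *)
Definition bitvec (k : nat) (i : 'I_(2 ^ k)) : {ffun 'I_k -> bool} :=
  [ffun j : 'I_k => odd (i %/ 2 ^ j)].

Definition dotF2 (k : nat) (y z : {ffun 'I_k -> bool}) : bool :=
  \big[addb/false]_(j < k) (y j && z j).

Definition hadamard (k : nat) (y : {ffun 'I_k -> bool}) : {ffun 'I_(2 ^ k) -> bool} :=
  [ffun i => dotF2 y (bitvec i)].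

Definition PA (k : nat) (A : {set {ffun 'I_k -> bool}}) : {set {ffun 'I_(2 ^ k) -> bool}} :=
  [set x | [exists y in A, x == hadamard y]].

Definition hamming (n : nat) (x y : {ffun 'I_n -> bool}) : nat :=
  #|[set i | x i != y i]|.

Definition far (R : realType) (n : nat) (eps : R)
    (P : {set {ffun 'I_n -> bool}}) (x : {ffun 'I_n -> bool}) : Prop :=
  forall y, y \in P -> eps * n%:R < (hamming x y)%:R.

(* Basis states |i, b, z> with i : 'I_n, b : bool, z : 'I_m (workspace). *)
Definition basis (n m : nat) : finType := ('I_n * bool * 'I_m)%type.

Definition qstate (R : realType) (n m : nat) := basis n m -> R[i].
Definition qop (R : realType) (n m : nat) := basis n m -> basis n m -> R[i].

Definition apply_op (R : realType) (n m : nat) (U : qop R n m) (v : qstate R n m)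
  : qstate R n m := fun s => \sum_(t : basis n m) U s t * v t.

(* U is unitary: U^dagger U = I (equivalent to unitarity in finite dimension). *)
Definition unitary (R : realType) (n m : nat) (U : qop R n m) : Prop :=
  forall s s' : basis n m,
    \sum_(t : basis n m) (U t s)^* * U t s' = (s == s')%:R.

Definition oracle (R : realType) (n m : nat) (x : {ffun 'I_n -> bool}) : qop R n m :=
  fun s t => ((t.1.1, t.1.2 (+) x t.1.1, t.2) == s)%:R.

(* A quantum query algorithm making T queries: workspace size m, an initial
   basis state, unitaries U_0, ..., U_T (interleaved with T oracle calls),
   and a final computational-basis measurement whose outcomes in acc mean
   "accept" (general measurements reduce to this by absorbing them into U_T
   and enlarging the workspace). *)
Record qalgo (R : realType) (n : nat) := QAlgo {
  qa_m : nat;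
  qa_T : nat;
  qa_init : basis n qa_m;
  qa_U : nat -> qop R n qa_m;
  qa_acc : {set basis n qa_m}
}.
Arguments qa_m {R n}.
Arguments qa_T {R n}.
Arguments qa_init {R n}.
Arguments qa_U {R n}.
Arguments qa_acc {R n}.
Arguments QAlgo {R n}.

Definition qalgo_wf (R : realType) (n : nat) (Q : qalgo R n) : Prop :=
  forall j, (j <= qa_T Q)%N -> unitary (qa_U Q j).

Definition delta (R : realType) (n m : nat) (s0 : basis n m) : qstate R n m :=
  fun s => (s == s0)%:R.

Fixpoint run (R : realType) (n : nat) (Q : qalgo R n) (x : {ffun 'I_n -> bool})
    (t : nat) : qstate R n (qa_m Q) :=
  match t with
  | 0 => apply_op (qa_U Q 0) (@delta R n (qa_m Q) (qa_init Q))
  | t'.+1 => apply_op (qa_U Q t) (apply_op (@oracle R n (qa_m Q) x) (@run R n Q x t'))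
  end.
Arguments run {R n} Q x t.

Definition sqnorm (R : realType) (z : R[i]) : R := (complex.Re z) ^+ 2 + (complex.Im z) ^+ 2.

Definition acc_prob (R : realType) (n : nat) (Q : qalgo R n) (x : {ffun 'I_n -> bool}) : R :=
  \sum_(s in qa_acc Q) sqnorm (run Q x (qa_T Q) s).

Definition one_sided_tester (R : realType) (n : nat) (P : {set {ffun 'I_n -> bool}})
    (eps : R) (Q : qalgo R n) : Prop :=
  qalgo_wf Q /\
  (forall x, x \in P -> acc_prob Q x = 1) /\
  (forall x, far eps P x -> acc_prob Q x <= 1 / 3).

(* Main.v *)
Require Import Defs.
From HB Require Import structures.
From mathcomp Require Import all_boot all_order all_algebra.
From mathcomp Require Import reals complex.
From mathcomp Require Import ring lra.
From Stdlib Require Import FunctionalExtensionality.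
Import Order.TTheory GRing.Theory Num.Theory.
Set Implicit Arguments. Unset Strict Implicit.

Lemma bits_inj {k} : forall a b : nat, (a < 2 ^ k)%N -> (b < 2 ^ k)%N ->
  (forall j, (j < k)%N -> odd (a %/ 2 ^ j) = odd (b %/ 2 ^ j)) -> a = b.
Proof.
elim: k => [|k IH] a b ha hb h.
  by move: ha hb; rewrite expn0 !ltnS !leqn0 => /eqP -> /eqP ->.
have h0 := h 0%N (ltn0Sn k); rewrite expn0 !divn1 in h0.
have e : a %/ 2 = b %/ 2.
  apply: IH.
  - by rewrite ltn_divLR // -expnSr.
  - by rewrite ltn_divLR // -expnSr.
  move=> j hj; rewrite -!divnMA -expnS; exact: h.
by rewrite (divn_eq a 2) (divn_eq b 2) !modn2 e h0.
Qed.

Lemma bitvec_inj k : injective (@bitvec k).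
Proof.
move=> a b /ffunP h; apply: val_inj => /=.
have := @bits_inj k a b (ltn_ord a) (ltn_ord b); apply.
move=> j hj; have := h (Ordinal hj); by rewrite !ffunE.
Qed.

Lemma bitvec_bij k : bijective (@bitvec k).
Proof.
apply: inj_card_bij; first exact: bitvec_inj.
by rewrite card_ffun card_bool !card_ord.
Qed.


Local Open Scope ring_scope.
Local Open Scope complex_scope.

Section Kern.
Variables (R : realType) (S : finType).
Definition kern := S -> S -> R.
Definition rapp (K : kern) (v : S -> R) s := \sum_t K s t * v t.
Definition kcomp (K L : kern) : kern := fun s t => \sum_u K s u * L u t.
Definition runit (K : kern) := forall s s', \sum_t K t s * K t s' = (s == s')%:R.

Lemma sum_delta (F : S -> R) u : \sum_t F t * (u == t)%:R = F u.
Proof.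
rewrite (bigD1 u) //= eqxx mulr1 big1 ?addr0 // => t /negbTE.
by rewrite eq_sym => ->; rewrite mulr0.
Qed.

Lemma sum_delta' (F : S -> R) u : \sum_t (t == u)%:R * F t = F u.
Proof.
rewrite -(sum_delta F u); apply: eq_bigr => t _; by rewrite mulrC eq_sym.
Qed.

Lemma rapp_comp K L v s : rapp (kcomp K L) v s = rapp K (rapp L v) s.
Proof.
rewrite /rapp /kcomp.
under eq_bigr do rewrite mulr_suml.
rewrite exchange_big; apply: eq_bigr => u _; rewrite mulr_sumr.
by apply: eq_bigr => t _; rewrite mulrA.
Qed.

Lemma runit_comp K L : runit K -> runit L -> runit (kcomp K L).
Proof.
move=> hK hL s s'; rewrite /kcomp.
transitivity (\sum_u \sum_u' L u s * L u' s' * \sum_t K t u * K t u').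
  under eq_bigr do rewrite big_distrlr.
  rewrite exchange_big; apply: eq_bigr => u _.
  rewrite exchange_big; apply: eq_bigr => u' _.
  rewrite mulr_sumr; apply: eq_bigr => t _.
  by rewrite mulrACA mulrC; congr (_ * _); rewrite mulrC.
rewrite -hL; apply: eq_bigr => u _.
under eq_bigr do rewrite hK.
by rewrite (sum_delta (fun u' => L u s * L u' s')) mulrC.
Qed.

Definition Pk (f : S -> S) : kern := fun s t => (f t == s)%:R.

Lemma rapp_Pk f v s : involutive f -> rapp (Pk f) v s = v (f s).
Proof.
move=> hf; rewrite /rapp /Pk.
under eq_bigr => t _ do rewrite (inv_eq hf).
by rewrite sum_delta'.
Qed.

Lemma runit_Pk f : involutive f -> runit (Pk f).
Proof.
move=> hf s s'; rewrite /Pk.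
under eq_bigr do rewrite (eq_sym (f s)).
rewrite (sum_delta' (fun t => (f s' == t)%:R)).
by rewrite (inj_eq (inv_inj hf)) eq_sym.
Qed.
End Kern.
Section Sgn.
Variable R : realType.
Definition sgn (b : bool) : R := if b then -1 else 1.
Lemma sgn_add a b : sgn (a (+) b) = sgn a * sgn b.
Proof. by case: a; case: b; rewrite /sgn /= ?mulN1r ?opprK ?mul1r ?mulr1. Qed.
Lemma sgn_sq b : sgn b * sgn b = 1.
Proof. by case: b; rewrite /sgn ?mulN1r ?opprK ?mul1r. Qed.

Lemma sgn_dot k (v z : {ffun 'I_k -> bool}) :
  sgn (dotF2 v z) = \prod_(j < k) sgn (v j && z j).
Proof.
rewrite /dotF2; apply: (big_morph sgn) => //; exact: sgn_add.
Qed.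

Lemma dot_xor k (v z z' : {ffun 'I_k -> bool}) :
  dotF2 v z (+) dotF2 v z' = dotF2 v [ffun j => z j (+) z' j].
Proof.
rewrite /dotF2 -big_split /=; apply: eq_bigr => j _.
by rewrite ffunE; case: (v j); case: (z j); case: (z' j).
Qed.

Lemma sum_sgn_dot k (z : {ffun 'I_k -> bool}) :
  \sum_(v : {ffun 'I_k -> bool}) sgn (dotF2 v z) =
  (z == [ffun => false])%:R * (2 ^ k)%:R.
Proof.
under eq_bigr do rewrite sgn_dot.
rewrite -(bigA_distr_bigA (fun (j : 'I_k) (b : bool) => sgn (b && z j))) /=.
under eq_bigr => j _ do rewrite big_bool /=.
case: eqP => [->|hz].
  rewrite mul1r; under eq_bigr do rewrite ffunE /sgn /=.
  by rewrite prodr_const card_ord natrX.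

rewrite mul0r.
case/boolP: [exists j, z j] => [/existsP [j hj]|/existsPn h]; last first.
  by exfalso; apply: hz; apply/ffunP => j; rewrite ffunE; exact/negbTE/h.
by rewrite (bigD1 j) //= hj /sgn /= addNr mul0r.
Qed.
End Sgn.

Lemma sum_bitvec (R : realType) k (G : {ffun 'I_k -> bool} -> R) :
  \sum_(y : 'I_(2 ^ k)) G (bitvec y) = \sum_v G v.
Proof.
symmetry; rewrite (reindex (@bitvec k)) //; exact: onW_bij (bitvec_bij k).
Qed.

Lemma xor_eq0 k (z z' : {ffun 'I_k -> bool}) :
  ([ffun j => z j (+) z' j] == [ffun => false]) = (z == z').
Proof.
apply/eqP/eqP => [/ffunP h|->]; last by apply/ffunP => j; rewrite !ffunE addbb.
apply/ffunP => j; have := h j; rewrite !ffunE; by case: (z j); case: (z' j).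
Qed.

Lemma orth (R : realType) k (i i' : 'I_(2 ^ k)) :
  \sum_(y : 'I_(2 ^ k)) sgn R (dotF2 (bitvec y) (bitvec i)) * sgn R (dotF2 (bitvec y) (bitvec i'))
  = (i == i')%:R * (2 ^ k)%:R.
Proof.
under eq_bigr do rewrite -sgn_add dot_xor.
rewrite (@sum_bitvec R k (fun v => sgn R (dotF2 v [ffun j => bitvec i j (+) bitvec i' j]))).
by rewrite sum_sgn_dot xor_eq0 (inj_eq (@bitvec_inj k)).
Qed.

Lemma dotC k (v z : {ffun 'I_k -> bool}) : dotF2 v z = dotF2 z v.
Proof. by rewrite /dotF2; apply: eq_bigr => j _; rewrite andbC. Qed.

Lemma orth' (R : realType) k (i i' : 'I_(2 ^ k)) :
  \sum_(y : 'I_(2 ^ k)) sgn R (dotF2 (bitvec i) (bitvec y)) * sgn R (dotF2 (bitvec i') (bitvec y))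
  = (i == i')%:R * (2 ^ k)%:R.
Proof. rewrite -orth; apply: eq_bigr => y _; by rewrite (dotC _ (bitvec i)) (dotC _ (bitvec i')). Qed.

Section Basis.
Variables (R : realType) (k m : nat).
Local Notation n := (2 ^ k)%N.
Local Notation B := (basis n m).

Definition chi (a b : 'I_n) : R := sgn R (dotF2 (bitvec a) (bitvec b)).
Definition cc : R := (Num.sqrt (n%:R))^-1.

Lemma cc2 : cc * cc * n%:R = 1.
Proof.
rewrite /cc -expr2 exprVn sqr_sqrtr ?ler0n // mulVf //.
by rewrite pnatr_eq0 expn_eq0.
Qed.

Definition Hk : kern R B :=
  fun s t => ((s.1.2 == t.1.2) && (s.2 == t.2))%:R * (cc * chi s.1.1 t.1.1).

Lemma sum_fiber (F : B -> R) b w :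
  \sum_t ((t.1.2 == b) && (t.2 == w))%:R * F t = \sum_i F (i, b, w).
Proof.
transitivity (\sum_i \sum_t (t == (i, b, w))%:R * F t); last first.
  by apply: eq_bigr => i _; rewrite sum_delta'.
rewrite exchange_big; apply: eq_bigr => -[[i' b'] w'] _ /=.
rewrite -mulr_suml; congr (_ * _).
rewrite (bigD1 i') //= big1 => [|j hj]; last first.
  by rewrite !xpair_eqE eq_sym (negbTE hj).
by rewrite !xpair_eqE eqxx addr0.
Qed.

Lemma rapp_Hk v s : rapp Hk v s = cc * \sum_i chi s.1.1 i * v (i, s.1.2, s.2).
Proof.
rewrite /rapp /Hk mulr_sumr -(sum_fiber (fun t => cc * (chi s.1.1 t.1.1 * v t)) s.1.2 s.2).
by apply: eq_bigr => t _; rewrite (eq_sym t.1.2) (eq_sym t.2) -!mulrA.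
Qed.

Lemma runit_Hk : runit Hk.
Proof.
move=> s s'; rewrite /Hk.
transitivity (\sum_t ((t.1.2 == s.1.2) && (t.2 == s.2))%:R *
   (((t.1.2 == s'.1.2) && (t.2 == s'.2))%:R * (cc * cc) *
    (chi t.1.1 s.1.1 * chi t.1.1 s'.1.1))).
  by apply: eq_bigr => t _; ring.
rewrite sum_fiber /= -mulr_sumr /chi orth.
case: s s' => [[i b] w] [[i' b'] w'] /=.
rewrite !xpair_eqE -!mulnb !natrM.
have := cc2; move: (cc * cc) => c h.
transitivity (((i == i')%:R * (b == b')%:R * (w == w')%:R) * (c * (2 ^ k)%:R) : R).
  ring.
by rewrite h mulr1.
Qed.

Definition Dk : kern R B := fun s t => (s == t)%:R * sgn R s.1.2.
Lemma rapp_Dk v s : rapp Dk v s = sgn R s.1.2 * v s.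
Proof.
rewrite /rapp /Dk; under eq_bigr do rewrite -mulrA eq_sym.
by rewrite (sum_delta' (fun t => sgn R s.1.2 * v t)).
Qed.
Lemma runit_Dk : runit Dk.
Proof.
move=> s s'; rewrite /Dk.
under eq_bigr do rewrite mulrACA sgn_sq mulr1.
by rewrite (sum_delta' (fun t => (t == s')%:R)).
Qed.

Definition realop (K : kern R B) : qop R n m := fun s t => (K s t)%:C.

Lemma conjR (r : R) : Num.conj (r%:C) = r%:C.
Proof. by rewrite /Num.conj /= oppr0. Qed.

Lemma unitary_realop K : runit K -> unitary (realop K).
Proof.
move=> hK s s'; rewrite /realop.
under eq_bigr do rewrite conjR -rmorphM.
by rewrite -rmorph_sum hK rmorph_nat.
Qed.

Lemma apply_realop K v :
  apply_op (realop K) (fun s => (v s)%:C) = fun s => (rapp K v s)%:C.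
Proof.
apply: functional_extensionality => s; rewrite /apply_op /realop /rapp rmorph_sum.
by apply: eq_bigr => t _; rewrite rmorphM.
Qed.

Definition sx (x : {ffun 'I_n -> bool}) (t : B) : B := (t.1.1, t.1.2 (+) x t.1.1, t.2).
Lemma sx_inv x : involutive (sx x).
Proof. by case=> [[i b] w]; rewrite /sx /= addbK. Qed.

Lemma oracleE x : @oracle R n m x = realop (@Pk R _ (sx x)).
Proof.
apply: functional_extensionality => s; apply: functional_extensionality => t; by rewrite /oracle /realop /Pk rmorph_nat.
Qed.

Lemma deltaE s0 : @delta R n m s0 = fun s => ((s == s0)%:R : R)%:C.
Proof. by apply: functional_extensionality => s; rewrite /delta rmorph_nat. Qed.

Lemma apply_oracle x v :
  apply_op (@oracle R n m x) (fun s => (v s)%:C) = fun s => (v (sx x s))%:C.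
Proof.
rewrite oracleE apply_realop; apply: functional_extensionality => s; by rewrite rapp_Pk //; exact: sx_inv.
Qed.
End Basis.

Section Algo.
Variables (R : realType) (k r : nat).
Local Notation n := (2 ^ k)%N.
Definition W := ('I_n * {ffun 'I_r -> 'I_n * bool})%type.
Definition mm := #|{: W}|.
Local Notation B := (basis n mm).
Definition enc (w : W) : 'I_mm := enum_rank w.
Definition dec (w : 'I_mm) : W := enum_val w.
Lemma encK : cancel enc dec. Proof. exact: enum_rankK. Qed.
Lemma decK : cancel dec enc. Proof. exact: enum_valK. Qed.

Lemma n_gt0 : (0 < n)%N. Proof. by rewrite expn_gt0. Qed.
Definition i0 : 'I_n := Ordinal n_gt0.
Definition zs : {ffun 'I_r -> 'I_n * bool} := [ffun => (i0, false)].
Definition init : B := (i0, false, enc (i0, zs)).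

Definition sY (s : B) : B := ((dec s.2).1, s.1.2, enc (s.1.1, (dec s.2).2)).
Lemma sY_inv : involutive sY.
Proof.
case=> [[i b] w]; rewrite /sY /= encK /=.
by rewrite -surjective_pairing decK.
Qed.

Definition tau (l : 'I_r) (s : B) : B :=
  let sl := (dec s.2).2 in
  ((sl l).1, (sl l).2,
   enc ((dec s.2).1, [ffun l' => if l' == l then (s.1.1, s.1.2) else sl l'])).
Lemma tau_inv l : involutive (tau l).
Proof.
case=> [[i b] w]; rewrite /tau /= encK /= ffunE eqxx /=.
congr (_, _, _); rewrite -[RHS]decK; congr enc.
rewrite [RHS]surjective_pairing; congr (_, _).
apply/ffunP => l'; rewrite !ffunE; case: eqP => [->|] //.
by rewrite -surjective_pairing.
Qed.

Definition Uk (j : nat) : kern R B :=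
  match j with
  | 0 => @Hk R k mm
  | 1 => @Dk R k mm
  | 2 => kcomp (@Hk R k mm) (kcomp (Pk R sY) (@Hk R k mm))
  | j'.+3 => match (insub j' : option 'I_r) with
             | Some l => kcomp (@Hk R k mm) (Pk R (tau l))
             | None => Pk R id
             end
  end.

Lemma runit_Uk j : runit (Uk j).
Proof.
case: j => [|[|[|j]]] /=; first exact: runit_Hk; first exact: runit_Dk.
  apply: runit_comp; first exact: runit_Hk.
  apply: runit_comp; [exact: runit_Pk sY_inv | exact: runit_Hk].
case: insub => [l|]; last exact: runit_Pk.
apply: runit_comp; [exact: runit_Hk | exact: runit_Pk (tau_inv l)].
Qed.

Lemma rapp_compE (K L : kern R B) v : rapp (kcomp K L) v = rapp K (rapp L v).
Proof. apply: functional_extensionality => s; exact: rapp_comp. Qed.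

Lemma bitvec_i0 : bitvec i0 = [ffun => false].
Proof. by apply/ffunP => j; rewrite !ffunE /= div0n. Qed.

Lemma chi_i0 a : chi R a i0 = 1.
Proof.
rewrite /chi bitvec_i0 /dotF2 big1 // => j _; by rewrite !ffunE andbF.
Qed.

Lemma collapse (G : 'I_n -> R) (c : bool) :
  \sum_(i : 'I_n) G i * ((i == i0) && c)%:R = G i0 * c%:R.
Proof.
under eq_bigr do rewrite -mulnb natrM mulrA.
rewrite -mulr_suml; congr (_ * _).
rewrite -(sum_delta G i0); apply: eq_bigr => i _; by rewrite eq_sym.
Qed.

Variable x : {ffun 'I_n -> bool}.
Let c := cc R k.
Let w0 := enc (i0, zs).

Definition Fx (y : 'I_n) : R := c * c * \sum_i chi R y i * sgn R (x i).

Definition Phi (j : nat) (s : B) : R :=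
  Fx (dec s.2).1 * c ^+ j.+1 * (s.1.2 == false)%:R *
  \prod_(l : 'I_r) (if (l < j)%N then (((dec s.2).2 l).2 == x ((dec s.2).2 l).1)
                    else ((dec s.2).2 l == (i0, false)))%:R.

Definition Qa (A : {set {ffun 'I_k -> bool}}) : qalgo R n :=
  QAlgo mm r.+2 init (fun j => realop (Uk j))
   [set s : B | (bitvec (dec s.2).1 \in A) &&
      [forall l, ((dec s.2).2 l).2 == hadamard (bitvec (dec s.2).1) ((dec s.2).2 l).1]].

Lemma run0 A : run (Qa A) x 0 = fun s =>
  (c * ((s.1.2 == false) && (s.2 == w0))%:R)%:C.
Proof.
rewrite /= deltaE apply_realop; apply: functional_extensionality => s.
rewrite rapp_Hk /init; congr (_ * _)%:C.
under eq_bigr do rewrite !xpair_eqE -andbA.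
by rewrite collapse chi_i0 mul1r.
Qed.


Lemma prod_bool (P : 'I_r -> bool) : \prod_l ((P l)%:R : R) = ([forall l, P l])%:R.
Proof.
case: (boolP [forall l, P l]) => [/forallP h|/forallPn [l hl]].
  by rewrite big1 // => l _; rewrite h.
by rewrite (bigD1 l) //= (negbTE hl) mul0r.
Qed.

Lemma zsE (sl : {ffun 'I_r -> 'I_n * bool}) :
  (sl == zs) = [forall l, sl l == (i0, false)].
Proof.
apply/eqP/forallP => [-> l|h]; first by rewrite ffunE.
by apply/ffunP => l; rewrite ffunE; apply/eqP.
Qed.

Lemma enc_eq a b : (enc a == enc b) = (a == b).
Proof. exact: (inj_eq (can_inj encK)). Qed.

Lemma run2 A : run (Qa A) x 2 = fun s => (Phi 0 s)%:C.
Proof.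
have -> : run (Qa A) x 2 = apply_op (realop (Uk 2)) (apply_op (@oracle R n mm x)
   (apply_op (realop (Uk 1)) (apply_op (@oracle R n mm x) (run (Qa A) x 0)))) by [].
rewrite run0 apply_oracle apply_realop apply_oracle apply_realop.
apply: functional_extensionality => s; congr (_)%:C.
have -> : (fun s => rapp (Uk 1) (fun s1 : B => c * (((sx x s1).1.2 == false) && ((sx x s1).2 == w0))%:R)
   (sx x s)) = fun s : B => sgn R (x s.1.1) * c * ((s.1.2 == false) && (s.2 == w0))%:R.
  apply: functional_extensionality => -[[i b] w] /=; rewrite rapp_Dk /= addbK.
  by case: b; case: (x i); rewrite /= ?mul0r ?mulr0 ?andFb ?andbF // ?mulrA.
rewrite /= !rapp_compE.
have -> : rapp (@Hk R k mm) (fun s : B => sgn R (x s.1.1) * c * ((s.1.2 == false) && (s.2 == w0))%:R)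
   = fun s => Fx s.1.1 * ((s.1.2 == false) && (s.2 == w0))%:R.
  apply: functional_extensionality => t; rewrite rapp_Hk /= /Fx.
  rewrite mulr_sumr mulr_sumr mulr_suml /c.
  by apply: eq_bigr => i _; ring.
have -> : rapp (Pk R sY) (fun s : B => Fx s.1.1 * ((s.1.2 == false) && (s.2 == w0))%:R)
   = fun s => Fx (dec s.2).1 * ((s.1.2 == false) && (enc (s.1.1, (dec s.2).2) == w0))%:R.
  apply: functional_extensionality => t; by rewrite rapp_Pk //; exact: sY_inv.
rewrite rapp_Hk /= /w0.
under eq_bigr do rewrite enc_eq xpair_eqE andbCA mulrA.
rewrite collapse chi_i0 mul1r /Phi prod_bool.

rewrite -zsE -mulnb natrM expr1 /c; ring.
Qed.


Definition good (sl : {ffun 'I_r -> 'I_n * bool}) (l : 'I_r) : bool :=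
  (sl l).2 == x (sl l).1.

Lemma phi_tau j (l : 'I_r) (vl : val l = j) i b w :
  Phi j (sx x (tau l (i, b, w))) =
  Fx (dec w).1 * c ^+ j.+1 * (good (dec w).2 l)%:R *
  (((i == i0) && (b == false))%:R *
   \prod_(l' | l' != l) (if (l' < j)%N then good (dec w).2 l'
                         else ((dec w).2 l' == (i0, false)))%:R).
Proof.
rewrite /Phi /tau /sx /= encK /= (bigD1 l) //= ffunE eqxx -vl ltnn xpair_eqE.
rewrite /good; congr (_ * _ * _ * (_ * _)).
  by case: ((dec w).2 l).2; case: (x ((dec w).2 l).1).
apply: eq_bigr => l' hl'; by rewrite ffunE (negbTE hl').
Qed.

Lemma runS A j : (j <= r)%N -> run (Qa A) x j.+2 = fun s => (Phi j s)%:C.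
Proof.
elim: j => [_|j IH hj]; first exact: run2.
have hjr : (j < r)%N := hj.
pose t3 := apply_op (realop (Uk j.+3)) (apply_op (@oracle R n mm x) (run (Qa A) x j.+2)).
have -> : run (Qa A) x j.+3 = t3 by reflexivity.
rewrite /t3.
have IH' := IH (ltnW hj).
rewrite IH'.
rewrite apply_oracle. rewrite apply_realop.
apply: functional_extensionality => s; congr (_)%:C.
have e : (insub j : option 'I_r) = Some (Ordinal hjr).
  by rewrite insubT; congr Some; apply: val_inj.
rewrite [Uk _]/= e rapp_compE.
set l := Ordinal hjr.
have vl : val l = j by [].
have -> : rapp (Pk R (tau l)) (fun s => Phi j (sx x s)) = fun s => Phi j (sx x (tau l s)).
  apply: functional_extensionality => t; rewrite rapp_Pk; first by [].
  exact: tau_inv.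
rewrite rapp_Hk.
set Y := (dec s.2).1; set sl := (dec s.2).2.
pose P : R := \prod_(l' | l' != l) (if (l' < j)%N then good sl l'
                         else (sl l' == (i0, false)))%:R.
transitivity (cc R k * \sum_i ((chi R s.1.1 i * (Fx Y * c ^+ j.+1 * (good sl l)%:R * P)) *
   ((i == i0) && (s.1.2 == false))%:R)).
  congr (_ * _); apply: eq_bigr => i _; rewrite (phi_tau vl); rewrite -/Y -/sl -/P /c; ring.
rewrite collapse chi_i0 mul1r /Phi -/Y -/sl (bigD1 l) //= ltnSn.
have -> : \prod_(l' | l' != l) (if (l' < j.+1)%N then (sl l').2 == x (sl l').1
                         else (sl l' == (i0, false)))%:R = P.
  apply: eq_bigr => l' hl'; rewrite ltnS leq_eqVlt.
  by move: hl'; rewrite -val_eqE /= => /negbTE ->.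
rewrite /good !exprS /c; ring.
Qed.

End Algo.

Lemma sqnormC (R : realType) (a : R) : sqnorm (a%:C) = a ^+ 2.
Proof. by rewrite /sqnorm /= expr0n addr0. Qed.

Lemma b2sq (R : realType) (b : bool) : ((b%:R : R) ^+ 2) = b%:R.
Proof. by case: b; rewrite ?expr1n ?expr0n. Qed.

Section Acc.
Variables (R : realType) (k r : nat).
Local Notation n := (2 ^ k)%N.
Local Notation B := (basis n (mm k r)).

Lemma sum_basis (G : B -> R) :
  \sum_s G s = \sum_(i : 'I_n) \sum_(b : bool) \sum_(w : W k r) G (i, b, enc w).
Proof.
transitivity (\sum_(p : 'I_n * bool) \sum_(w : 'I_(mm k r)) G (p, w)).
  rewrite pair_bigA.
  by apply: eq_big => [s|[p w] _].
transitivity (\sum_(p : 'I_n * bool) \sum_(w : W k r) G (p, enc w)).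
  apply: eq_bigr => p _; rewrite (reindex (@enc k r)); first by [].
  by apply: onW_bij; exact: (Bijective (@encK k r) (@decK k r)).
by rewrite [RHS]pair_bigA; apply: eq_big => [s|[i b] _].
Qed.

Variable x : {ffun 'I_n -> bool}.
Let c := cc R k.

Definition agree (y : 'I_n) : R := \sum_i (x i == hadamard (bitvec y) i)%:R.

Lemma acc_formula A : acc_prob (Qa R r A) x =
  \sum_(y : 'I_n) ((bitvec y \in A)%:R * Fx R x y ^+ 2 * (c * c * agree y) ^+ r).
Proof.
rewrite /acc_prob.
have E := runS R x A (leqnn r).
have -> : qa_T (Qa R r A) = r.+2 by [].
rewrite E.
under eq_bigr do rewrite sqnormC.
rewrite big_mkcond /= sum_basis.
pose g (y : 'I_n) (p : 'I_n * bool) : R :=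
  ((p.2 == hadamard (bitvec y) p.1) && (p.2 == x p.1))%:R.
have T : forall i b (w : W k r),
  (if (i, b, enc w) \in [set s : B | (bitvec (dec s.2).1 \in A) &&
      [forall l, ((dec s.2).2 l).2 == hadamard (bitvec (dec s.2).1) ((dec s.2).2 l).1]]
   then Phi R x r (i, b, enc w) ^+ 2 else 0) =
  (b == false)%:R * ((bitvec w.1 \in A)%:R * Fx R x w.1 ^+ 2 * c ^+ (2 * r.+1) *
     \prod_l g w.1 (w.2 l)).
  move=> i b [y sl]; rewrite inE /= encK /=.
  rewrite /Phi /= encK /=.
  have -> : \prod_(l : 'I_r) ((if (l < r)%N then (sl l).2 == x (sl l).1
                    else sl l == (i0 k, false))%:R : R) = \prod_l ((sl l).2 == x (sl l).1)%:R.
    by apply: eq_bigr => l _; rewrite ltn_ord.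
  rewrite /g.
  under [in RHS]eq_bigr do rewrite -mulnb natrM.
  rewrite big_split /= prod_bool.
  have ifE : forall (bb : bool) (X : R), (if bb then X else 0) = bb%:R * X.
    by case=> X; rewrite ?mul1r ?mul0r.
  rewrite ifE -mulnb natrM !exprMn !b2sq prod_bool mulnC exprM /c; ring.
transitivity (\sum_(i < n) \sum_(b : bool) \sum_(w : W k r) (b == false)%:R *
   ((bitvec w.1 \in A)%:R * Fx R x w.1 ^+ 2 * c ^+ (2 * r.+1) * \prod_l g w.1 (w.2 l))).
  by apply: eq_bigr => i _; apply: eq_bigr => b _; apply: eq_bigr => w _; exact: T.
transitivity (\sum_(i < n) \sum_(w : W k r)
   ((bitvec w.1 \in A)%:R * Fx R x w.1 ^+ 2 * c ^+ (2 * r.+1) * \prod_l g w.1 (w.2 l))).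
  apply: eq_bigr => i _; rewrite big_bool /=.
  rewrite [X in X + _]big1 ?add0r; last by move=> w _; rewrite mul0r.
  by apply: eq_bigr => w _; rewrite mul1r.
rewrite sumr_const card_ord.
have Ag : forall y, \sum_p g y p = agree y.
  move=> y; transitivity (\sum_i \sum_b g y (i, b)).
    by rewrite [RHS]pair_bigA; apply: eq_big => [?|[i b] _].
  apply: eq_bigr => i _; rewrite big_bool /g /=.
  by case: (x i); case: (hadamard (bitvec y) i); rewrite /= ?add0r ?addr0.
transitivity ((\sum_(y : 'I_n) ((bitvec y \in A)%:R * Fx R x y ^+ 2 *
   c ^+ (2 * r.+1) * agree y ^+ r)) *+ n).
  congr (_ *+ _).
  transitivity (\sum_(y : 'I_n) \sum_(sl : {ffun 'I_r -> 'I_n * bool})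
    ((bitvec y \in A)%:R * Fx R x y ^+ 2 * c ^+ (2 * r.+1) * \prod_l g y (sl l))).
    by rewrite [RHS]pair_bigA; apply: eq_big => [?|[y sl] _].
  apply: eq_bigr => y _; rewrite -mulr_sumr; congr (_ * _).
  rewrite -(bigA_distr_bigA (fun (l : 'I_r) p => g y p)) /=.
  by rewrite prodr_const card_ord Ag.
rewrite -mulr_natr mulr_suml; apply: eq_bigr => y _.
have h2 := cc2 R k; rewrite -/c in h2.
transitivity ((bitvec y \in A)%:R * Fx R x y ^+ 2 * (c * c * agree y) ^+ r * (c * c * n%:R)).
  have ec : c ^+ (2 * r.+1) = (c * c) ^+ r * (c * c) by rewrite exprM exprSr expr2.
  by rewrite ec !exprMn /c; ring.
by rewrite h2 mulr1.
Qed.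
End Acc.

Section Props.
Variables (R : realType) (k : nat).
Local Notation n := (2 ^ k)%N.
Variable x : {ffun 'I_n -> bool}.
Let c := cc R k.

Lemma parseval : \sum_(y : 'I_n) Fx R x y ^+ 2 = 1.
Proof.
pose f i := sgn R (x i).
transitivity (\sum_y \sum_i \sum_j ((c * c) ^+ 2 * (f i * f j)) * (chi R y i * chi R y j)).
  apply: eq_bigr => y _; rewrite /Fx exprMn [X in _ * X]expr2 big_distrlr mulr_sumr.
  apply: eq_bigr => i _; rewrite mulr_sumr; apply: eq_bigr => j _; rewrite /f /c /=; ring.
rewrite exchange_big; under eq_bigr do rewrite exchange_big.
transitivity (\sum_i \sum_j ((c * c) ^+ 2 * (f i * f j)) * ((j == i)%:R * n%:R)).
  apply: eq_bigr => i _; apply: eq_bigr => j _; rewrite -mulr_sumr; congr (_ * _).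
  by rewrite /chi orth eq_sym.
transitivity (\sum_(i : 'I_n) ((c * c) ^+ 2 * n%:R)).
  apply: eq_bigr => i _.
  under eq_bigr do rewrite mulrCA mulrA.
  rewrite -mulr_suml sum_delta' /f sgn_sq; ring.
rewrite sumr_const card_ord -mulr_natr.
transitivity ((cc R k * cc R k * n%:R) ^+ 2); first by rewrite /c; ring.
by rewrite cc2 expr1n.
Qed.

Lemma cc_ge0 : 0 <= c.
Proof. by rewrite /c /cc invr_ge0 sqrtr_ge0. Qed.

Lemma complete r A : x \in PA A -> acc_prob (Qa R r A) x = 1.
Proof.
rewrite inE => /existsP [Y0 /andP [hY0 /eqP hx]].
case: (bitvec_bij k) => g hg1 hg2.
pose y0 := g Y0.
have by0 : bitvec y0 = Y0 := hg2 Y0.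
have hF : forall y, Fx R x y = (y == y0)%:R.
  move=> y; rewrite /Fx.
  transitivity (cc R k * cc R k * ((y == y0)%:R * n%:R)).
    congr (_ * _); rewrite -(orth' R y y0); apply: eq_bigr => i _.
    by rewrite hx ffunE by0.
  by rewrite mulrCA cc2 mulr1.
rewrite acc_formula (bigD1 y0) //= big1 ?addr0; last first.
  by move=> y hy; rewrite hF (negbTE hy) expr0n /= mulr0 mul0r.
rewrite hF eqxx by0 hY0 expr1n !mul1r.
have -> : agree R x y0 = n%:R.
  rewrite /agree by0 -hx.
  under eq_bigr do rewrite eqxx.
  by rewrite sumr_const card_ord.
by rewrite cc2 expr1n.
Qed.

Lemma ham_sum (z : {ffun 'I_n -> bool}) :
  ((hamming x z)%:R : R) = \sum_i (x i != z i)%:R.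
Proof.
rewrite /hamming -sum1_card natr_sum big_mkcond /=; apply: eq_bigr => i _.
by rewrite inE; case: (x i != z i).
Qed.

Lemma ham_agree y : ((hamming x (hadamard (bitvec y)))%:R : R) + agree R x y = n%:R.
Proof.
rewrite ham_sum /agree -big_split /=.
rewrite -[n in RHS]card_ord -sumr_const; apply: eq_bigr => i _.
by case: (x i == _); rewrite /= ?add0r ?addr0.
Qed.

Lemma sound r A (eps : R) : far eps (PA A) x ->
  (forall t : R, 0 <= t -> t <= 1 - eps -> t ^+ r <= 1 / 3) ->
  acc_prob (Qa R r A) x <= 1 / 3.
Proof.
move=> hfar h13; rewrite acc_formula.
have -> : (1 / 3 : R) = \sum_y Fx R x y ^+ 2 * (1 / 3).
  by rewrite -mulr_suml parseval !mul1r.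
apply: ler_sum => y _.
case hA: (bitvec y \in A); last first.
  by rewrite mul0r mul0r; apply: mulr_ge0; [exact: sqr_ge0|rewrite divr_ge0 ?ler0n].
rewrite -mulrA (_ : (true%:R : R) = 1) // mul1r.
apply: ler_wpM2l; first exact: sqr_ge0.
have q0 : 0 <= cc R k * cc R k by apply: mulr_ge0; exact: cc_ge0.
have hq := cc2 R k.
apply: h13.
  by apply: mulr_ge0 => //; apply: sumr_ge0 => i _; exact: ler0n.
have hin : hadamard (bitvec y) \in PA A.
  by rewrite inE; apply/existsP; exists (bitvec y); rewrite hA eqxx.
have hf := hfar _ hin.
have ha : agree R x y = n%:R - (hamming x (hadamard (bitvec y)))%:R.
  by rewrite -(ham_agree y) addrAC subrr add0r.
rewrite ha mulrBr hq lerD2l lerN2.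
apply: le_trans (_ : cc R k * cc R k * (eps * n%:R) <= _).
  by rewrite mulrCA hq mulr1.
by apply: ler_wpM2l => //; exact: ltW.
Qed.
End Props.

Lemma bern (R : realType) (e : R) n : 0 <= e -> e <= 1 ->
  (1 - e) ^+ n * (1 + n%:R * e) <= 1.
Proof.
move=> e0 e1; elim: n => [|n IH]; first by rewrite expr0 mul0r addr0 mul1r.
have p0 : 0 <= (1 - e) ^+ n by apply: exprn_ge0; lra.
have h : (1 - e) * (1 + n.+1%:R * e) <= 1 + n%:R * e.
  rewrite -natr1.
  have nn : 0 <= (n%:R : R) by exact: ler0n.
  nra.
apply: le_trans IH; rewrite exprS -mulrA mulrCA.
by apply: ler_wpM2l.
Qed.

Lemma pow_small (R : realType) (eps : R) r : 0 < eps -> eps < 1 ->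
  2 < r%:R * eps -> forall t : R, 0 <= t -> t <= 1 - eps -> t ^+ r <= 1 / 3.
Proof.
move=> e0 e1 hr t t0 t1.
have : t ^+ r <= (1 - eps) ^+ r.
  by apply: lerXn2r; rewrite ?nnegrE //; lra.
have := bern r (ltW e0) (ltW e1).
have p0 : 0 <= (1 - eps) ^+ r by apply: exprn_ge0; lra.
move: ((1 - eps) ^+ r) p0 => X p0 h1 h2.
have : X * 3 <= 1.
  apply: le_trans h1; apply: ler_wpM2l => //; lra.
lra.
Qed.

Section Triv.
Variables (R : realType) (k : nat) (A : {set {ffun 'I_k -> bool}}).
Local Notation n := (2 ^ k)%N.
Definition init0 : basis n 1 := (i0 k, false, ord0).
Definition Q0 : qalgo R n :=
  QAlgo 1 0 init0 (fun _ => @realop R k 1 (Pk R id))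
    (if A == set0 then set0 else setT).

Lemma Q0_wf : qalgo_wf Q0.
Proof. move=> j _; apply: unitary_realop; exact: runit_Pk. Qed.

Lemma Q0_acc x : acc_prob Q0 x = (A != set0)%:R.
Proof.
rewrite /acc_prob.
have -> : run Q0 x (qa_T Q0) = fun s => (((s == init0)%:R : R))%:C.
  rewrite /= deltaE apply_realop; apply: functional_extensionality => s.
  by rewrite rapp_Pk.
under eq_bigr do rewrite sqnormC b2sq.
rewrite /=; case: (A == set0); first by rewrite big_set0.
rewrite /=.
transitivity (\sum_(s : basis n 1) (s == init0)%:R * (1 : R)).
  by apply: eq_big => [s|s _]; rewrite ?inE ?mulr1.
by rewrite sum_delta'.
Qed.
End Triv.


Local Close Scope complex_scope.
Theorem lemma3p2 (R : realType) :
  exists C : R, 0 < C /\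
    forall (k : nat) (A : {set {ffun 'I_k -> bool}}) (eps : R), 0 < eps ->
      exists Q : qalgo R (2 ^ k),
        one_sided_tester (PA A) eps Q /\ (qa_T Q)%:R <= C / eps.
Proof.
exists 5; split; first by rewrite ltr0n.
move=> k A eps he.
have ie : 0 < eps^-1 by rewrite invr_gt0.
case: (ltrP eps 1) => [hlt|hge].
  pose r := (Num.truncn (2 / eps)).+1.
  exists (Qa R r A); split; last first.
    have -> : qa_T (Qa R r A) = r.+2 by [].
    have h1 : (Num.truncn (2 / eps))%:R <= 2 / eps.
      by rewrite truncn_le divr_ge0 // ltW.
    have h2 : 1 <= eps^-1.
      by rewrite invf_ge1 // ltW.
    have e : (r.+2)%:R = (Num.truncn (2 / eps))%:R + 3 :> R.
      by rewrite /r -addn3 natrD.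
    rewrite e; lra.
  split; first by move=> j _; apply: unitary_realop; exact: runit_Uk.
  split; first by move=> x hx; exact: complete.
  move=> x hfar; apply: (sound hfar).
  apply: pow_small => //.
  have := truncnS_gt (2 / eps); rewrite -/r => h.
  by rewrite -ltr_pdivrMr.
exists (Q0 R A); split; last first.
  by rewrite /= divr_ge0 // ltW.
split; first exact: Q0_wf.
split; first by move=> x hx; rewrite Q0_acc; case: (A =P set0) => // hA;
  move: hx; rewrite inE hA => /existsP [y]; rewrite inE.
move=> x hfar; rewrite Q0_acc.
case: (A =P set0) => [_|/eqP hA]; first by rewrite /= divr_ge0.
exfalso.
case/set0Pn: hA => Y0 hY0.
have hin : hadamard Y0 \in PA A.
  by rewrite inE; apply/existsP; exists Y0; rewrite hY0 eqxx.
have := hfar _ hin.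
have hc : (hamming x (hadamard Y0) <= 2 ^ k)%N.
  by rewrite /hamming -[X in (_ <= X)%N](card_ord (2 ^ k)) max_card.
have : ((hamming x (hadamard Y0))%:R : R) <= (2 ^ k)%:R by rewrite ler_nat.
have : (0 : R) <= (2 ^ k)%:R by exact: ler0n.
move: ((2 ^ k)%:R : R) ((hamming x (hadamard Y0))%:R : R) => N H hN hH h.
nra.
Qed.
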